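(* Let $t$ be a positive integer with $5\nmid t$. Then for every integer $n\ge0$, $$b^{2}_{5,4t}(4n+3)\equiv 0\pmod{10}.$$
   Context: For integers $r\ge1$ write $f_r=\prod_{i\ge1}(1-q^{ri})$. For coprime positive integers $\ell,m$ and a positive integer $k$, $b^{k}_{\ell,m}(n)$ denotes the number of $k$-colored partitions of $n$ into parts not divisible by $\ell$ or by $m$, i.e. $\sum_{n\ge0} b^{k}_{\ell,m}(n)q^n=\dfrac{f_\ell^k f_m^k}{f_1^k f_{\ell m}^k}$. Thus $\sum b^2_{5,4t}(n)q^n=\dfrac{f_5^2f_{4t}^2}{f_1^2f_{20t}^2}$. *)

(* Defs.v *)
From mathcomp Require Import all_boot.
Set Implicit Arguments. Unset Strict Implicit. Unset Printing Implicit Defensive.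

(* Number of ways to write n as sum_{p in L} a_p * p with a_p >= 0, where the
   entries of L are treated as distinct "part types" (a part size j appearing
   k times in L represents the k colours of the part j). *)
Fixpoint npart_list (L : seq nat) (n : nat) : nat :=
  match L with
  | [::] => (n == 0)%N
  | j :: L' =>
      if j == 0 then 0 (* never used: part sizes are positive *)
      else sumn [seq npart_list L' (n - a * j) | a <- iota 0 (n %/ j).+1]
  end.

Definition colored_parts (k l m n : nat) : seq nat :=
  flatten [seq nseq k j | j <- iota 1 n & ~~ (l %| j) && ~~ (m %| j)].

Definition b (k l m n : nat) : nat := npart_list (colored_parts k l m n) n.

(* Main.v *)
Require Import Defs.
From mathcomp Require Import all_boot.
From mathcomp Require Import all_algebra.
From mathcomp Require Import ring zify.
Set Implicit Arguments. Unset Strict Implicit. Unset Printing Implicit Defensive.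
Import GRing.Theory.
Open Scope ring_scope.

Section Cong.
Variable R : comNzRingType.
Implicit Types (y a b c d u : R).

Definition cg y (m : nat) a b := exists r, a - b = r * y ^+ m.

Lemma cg_refl y m a : cg y m a a.
Proof. by exists 0; rewrite subrr mul0r. Qed.
Lemma cg_eq y m a b : a = b -> cg y m a b.
Proof. by move=> ->; apply: cg_refl. Qed.
Lemma cg_sym y m a b : cg y m a b -> cg y m b a.
Proof. by case=> r h; exists (-r); rewrite mulNr -h opprB. Qed.
Lemma cg_trans y m a b c : cg y m a b -> cg y m b c -> cg y m a c.
Proof.
by case=> r h [s h']; exists (r + s); rewrite mulrDl -h -h' addrA subrK.
Qed.
Lemma cgD y m a b c d : cg y m a b -> cg y m c d -> cg y m (a + c) (b + d).
Proof.
by case=> r h [s h']; exists (r + s); rewrite mulrDl -h -h'; ring.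
Qed.
Lemma cgN y m a b : cg y m a b -> cg y m (- a) (- b).
Proof. by case=> r h; exists (- r); rewrite mulNr -h; ring. Qed.
Lemma cgB y m a b c d : cg y m a b -> cg y m c d -> cg y m (a - c) (b - d).
Proof. by move=> h1 h2; apply: cgD=> //; apply: cgN. Qed.
Lemma cgM y m a b c d : cg y m a b -> cg y m c d -> cg y m (a * c) (b * d).
Proof.
case=> r h [s h']; exists (r * c + b * s).
have -> : a * c - b * d = (a - b) * c + b * (c - d) by ring.
by rewrite h h'; ring.
Qed.
Lemma cgMl y m a b c : cg y m a b -> cg y m (c * a) (c * b).
Proof. by move=> h; apply: cgM=> //; apply: cg_refl. Qed.
Lemma cgMr y m a b c : cg y m a b -> cg y m (a * c) (b * c).
Proof. by move=> h; apply: cgM=> //; apply: cg_refl. Qed.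
Lemma cgX y m a b k : cg y m a b -> cg y m (a ^+ k) (b ^+ k).
Proof.
move=> h; elim: k=> [|k IH]; first exact: cg_refl.
by rewrite !exprS; apply: cgM.
Qed.
Lemma cg_le y m m' a b : (m' <= m)%N -> cg y m a b -> cg y m' a b.
Proof.
move=> le [r h]; exists (r * y ^+ (m - m')).
by rewrite h -mulrA -exprD subnK.
Qed.
Lemma cg_mod y m z k a b : (exists w, y ^+ m = w * z ^+ k) -> cg y m a b -> cg z k a b.
Proof. by case=> w hw [r h]; exists (r * w); rewrite h hw mulrA. Qed.
Lemma cg_pow0 y m k s : (m <= k)%N -> cg y m (s * y ^+ k) 0.
Proof. by move=> le; exists (s * y ^+ (k - m)); rewrite subr0 -mulrA -exprD subnK. Qed.

Lemma cg_unit y m u : cg y 1 u 1 -> exists v, cg y m (u * v) 1.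
Proof.
case=> s h; exists (\sum_(i < m) (- s * y) ^+ i).
have hu : u = 1 - (- s * y) by rewrite -[u](subrK 1) h expr1; ring.
rewrite hu; set z := - s * y.
have -> : (1 - z) * \sum_(i < m) z ^+ i = 1 - z ^+ m.
  by rewrite -opprB mulNr -subrX1 opprB.
exists (- (- s) ^+ m); rewrite /z exprMn; ring.
Qed.
Lemma cg_cancel y m u a b : cg y 1 u 1 -> cg y m (u * a) (u * b) -> cg y m a b.
Proof.
case/(cg_unit m)=> v hv h.
have e1 := cgMr a hv; have e2 := cgMr b hv; have e3 := cgMl v h.
rewrite mul1r in e1; rewrite mul1r in e2.
apply: cg_trans (cg_sym e1) _; apply: cg_trans _ e2.
by move: e3; rewrite !mulrA ![v * u]mulrC.
Qed.

Lemma cg_prod1 y m (I : Type) (r : seq I) (P : pred I) (F : I -> R) :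
  (forall i, P i -> cg y m (F i) 1) -> cg y m (\prod_(i <- r | P i) F i) 1.
Proof.
move=> h; elim/big_rec: _ => [|i x Pi hx]; first exact: cg_refl.
by rewrite -[1](mulr1 1); apply: cgM=> //; apply: h.
Qed.

Lemma cg_unitM y u v : cg y 1 u 1 -> cg y 1 v 1 -> cg y 1 (u * v) 1.
Proof. by move=> h1 h2; rewrite -[1](mulr1 1); apply: cgM. Qed.

Definition Ep (x : R) (K : nat) := \prod_(i < K) (1 - x ^+ i.+1).
Definition Op (x : R) (K : nat) := \prod_(i < K) (1 - x ^+ (i.*2).+1).

Lemma cg_factor x m k : (m <= k)%N -> cg x m (1 - x ^+ k) 1.
Proof. by move=> le; exists (- x ^+ (k - m)); rewrite -{1}(subnK le) exprD; ring. Qed.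

Lemma Ep_unit x K : cg x 1 (Ep x K) 1.
Proof. by apply: cg_prod1=> i _; apply: cg_factor. Qed.

Lemma Ep_trunc x K K' : (K <= K')%N -> cg x K.+1 (Ep x K') (Ep x K).
Proof.
move=> le; rewrite /Ep -(subnK le) addnC big_split_ord /=.
rewrite -[X in cg _ _ _ X]mulr1; apply: cgMl.
apply: cg_prod1=> i _; apply: cg_factor; rewrite /=; lia.
Qed.

Lemma Ep_split x K : Ep x K.*2 = Op x K * Ep (x ^+ 2) K.
Proof.
rewrite /Ep /Op; elim: K=> [|K IH]; first by rewrite !big_ord0 mulr1.
rewrite doubleS !big_ord_recr /= IH -!exprM.
have -> : (K.*2.+1.+1 = 2 * K.+1)%N by lia.
ring.
Qed.

Lemma Op_neg x K : Op x K * Op (- x) K = Op (x ^+ 2) K.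
Proof.
rewrite /Op -big_split /=; apply: eq_bigr=> i _.
rewrite exprNn -exprM.
have -> : ((-1 : R) ^+ (i.*2).+1) = -1 by rewrite exprS -mul2n exprM sqrrN !expr1n mulr1.
have -> : (2 * (i.*2).+1 = (i.*2).+1 + (i.*2).+1)%N by lia.
rewrite exprD; ring.
Qed.

Lemma Ep_prod x K : Ep x K.*2 * Ep (- x) K.*2 * Ep (x ^+ 4) K
   = Ep (x ^+ 2) K.*2 * Ep (x ^+ 2) K ^+ 2.
Proof.
rewrite !Ep_split sqrrN -!exprM /=.
have -> : Op x K * Ep (x ^+ 2) K * (Op (- x) K * Ep (x ^+ 2) K) * Ep (x ^+ 4) K
  = (Op x K * Op (- x) K) * Ep (x ^+ 4) K * Ep (x ^+ 2) K ^+ 2 by ring.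
by rewrite Op_neg.
Qed.

End Cong.

Section QB.
Variable R : comNzRingType.
Implicit Types (p z x : R).

Fixpoint qb p (m j : nat) : R :=
  match m with
  | 0 => (j == 0)%:R
  | m'.+1 => match j with
             | 0 => 1
             | j'.+1 => qb p m' j'.+1 + p ^+ (m' - j') * qb p m' j'
             end
  end.

Lemma qb0 p m : qb p m 0 = 1.
Proof. by case: m. Qed.

Lemma qb_gt p m j : (m < j)%N -> qb p m j = 0.
Proof.
elim: m j=> [|m IH] [|j] //= lt.
by rewrite !IH ?mulr0 ?addr0 //; lia.
Qed.

Lemma qb_mm p m : qb p m m = 1.
Proof.
elim: m=> [|m IH] //=; by rewrite qb_gt // subnn expr0 mul1r IH add0r.
Qed.

Lemma qb_prod p m j : (j <= m)%N -> Ep p j * Ep p (m - j) * qb p m j = Ep p m.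
Proof.
elim: m j=> [|m IH] [|j] //=.
- by move=> _; rewrite /Ep !big_ord0 !mul1r.
- by move=> _; rewrite /Ep big_ord0 subn0 mul1r mulr1.
- rewrite ltnS leq_eqVlt => /orP [/eqP ->|lt].
    by rewrite qb_gt // !subnn expr0 mul1r qb_mm add0r /Ep big_ord0 !mulr1.
  have IH1 := IH _ lt.
  have IH2 := IH _ (ltnW lt).
  rewrite subSS.
  have e1 : Ep p j.+1 = Ep p j * (1 - p ^+ j.+1) by rewrite /Ep big_ord_recr.
  have e2 : Ep p (m - j) = Ep p (m - j.+1) * (1 - p ^+ (m - j)).
    by rewrite /Ep -[in LHS](subnSK lt) big_ord_recr /= subnSK.
  have e3 : Ep p m.+1 = Ep p m * (1 - p ^+ m.+1) by rewrite /Ep big_ord_recr.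
  have hp : p ^+ m.+1 = p ^+ j.+1 * p ^+ (m - j) by rewrite -exprD; congr (_ ^+ _); lia.
  transitivity ((1 - p ^+ (m - j)) * (Ep p j.+1 * Ep p (m - j.+1) * qb p m j.+1)
     + p ^+ (m - j) * (1 - p ^+ j.+1) * (Ep p j * Ep p (m - j) * qb p m j)).
    rewrite e1 e2; ring.
  rewrite IH1 IH2 e3 hp; ring.
Qed.

Definition qterm p z m j := qb p m j * (-1) ^+ j * p ^+ 'C(j, 2) * z ^+ (m - j).

Lemma qbinom p z m :
  \prod_(i < m) (z - p ^+ i) = \sum_(j < m.+1) qterm p z m j.
Proof.
elim: m=> [|m IH].
  by rewrite big_ord0 big_ord1 /qterm /= !expr0 !mulr1.
rewrite big_ord_recr /= IH [RHS]big_ord_recl.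
have ha : forall j : 'I_m.+1,
    qterm p z m.+1 (bump 0 j) = z * qterm p z m j.+1 - p ^+ m * qterm p z m j.
  move=> [j lj] /=; rewrite /bump /= add1n /qterm /=.
  rewrite binS bin1.
  move: lj; rewrite ltnS leq_eqVlt => /orP [/eqP ->|lt].
    rewrite qb_gt // !subnn qb_mm exprS exprD; ring.
  have ez : z ^+ (m - j) = z * z ^+ (m - j.+1) by rewrite -exprS subnSK.
  have ep : p ^+ m = p ^+ (m - j) * p ^+ j by rewrite -exprD subnK // ltnW.
  rewrite subSS exprS exprD ez ep; ring.
rewrite (eq_bigr _ (fun j _ => ha j)) sumrB -!mulr_sumr.
have hs : \sum_(j < m.+1) qterm p z m j.+1 = \sum_(j < m.+1) qterm p z m j - qterm p z m 0.
  have e1 : \sum_(j < m.+2) qterm p z m j = qterm p z m 0 + \sum_(j < m.+1) qterm p z m j.+1.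
    by rewrite big_ord_recl.
  have e2 : \sum_(j < m.+2) qterm p z m j = \sum_(j < m.+1) qterm p z m j + qterm p z m m.+1.
    by rewrite big_ord_recr.
  have e3 : qterm p z m m.+1 = 0 by rewrite /qterm qb_gt // !mul0r.
  by rewrite e2 e3 addr0 in e1; rewrite e1 addrC addKr.
rewrite hs.
have -> : qterm p z m.+1 0 = z * qterm p z m 0 by rewrite /qterm !qb0 !subn0 exprS; ring.
ring.
Qed.

End QB.

Lemma sum_double n : (\sum_(i < n) (i * 2) = 'C(n, 2) * 2)%N.
Proof.
elim: n=> [|n IH]; first by rewrite big_ord0.
by rewrite big_ord_recr /= IH binS bin1; lia.
Qed.

Lemma bin2_eq j : ('C(j, 2) * 2 + j = j * j)%N.
Proof. elim: j=> [|j IH] //; rewrite binS bin1; nia. Qed.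

Section Gauss.
Variable R : comNzRingType.
Implicit Types (x : R).

Lemma prodX x n (f : nat -> nat) : \prod_(i < n) x ^+ f i = x ^+ (\sum_(i < n) f i)%N.
Proof.
elim: n=> [|n IH]; first by rewrite !big_ord0.
by rewrite !big_ord_recr /= IH exprD.
Qed.

Lemma prodC x n : \prod_(i < n) x = x ^+ n.
Proof.
elim: n=> [|n IH]; first by rewrite !big_ord0.
by rewrite !big_ord_recr /= IH exprSr.
Qed.

Lemma gauss_prod x n : (0 < n)%N ->
  \prod_(i < n.*2) (x ^+ (n.*2.-1) - (x ^+ 2) ^+ i)
  = (-1) ^+ n * x ^+ ('C(n, 2) * 2 + n * n.*2.-1) * Op x n ^+ 2.
Proof.
move=> n0.
have -> : \prod_(i < n.*2) (x ^+ (n.*2.-1) - (x ^+ 2) ^+ i)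
       = \prod_(i < n + n) (x ^+ (n.*2.-1) - (x ^+ 2) ^+ i) by rewrite addnn.
rewrite big_split_ord /=.
have h1 : \prod_(i < n) (x ^+ (n.*2.-1) - (x ^+ 2) ^+ (lshift n i))
   = \prod_(i < n) ((-1) * x ^+ (i * 2) * (1 - x ^+ ((n - i.+1).*2.+1))).
  apply: eq_bigr=> [[i li]] _ /=.
  have -> : x ^+ (n.*2.-1) = x ^+ (i * 2) * x ^+ ((n - i.+1).*2.+1).
    by rewrite -exprD; congr (_ ^+ _); lia.
  rewrite -exprM mulnC; ring.
have h2 : \prod_(i < n) (x ^+ (n.*2.-1) - (x ^+ 2) ^+ (rshift n i))
   = \prod_(i < n) (x ^+ (n.*2.-1) * (1 - x ^+ (i.*2.+1))).
  apply: eq_bigr=> [[i li]] _ /=.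
  have -> : (x ^+ 2) ^+ (n + i) = x ^+ (n.*2.-1) * x ^+ (i.*2.+1).
    by rewrite -exprM -exprD; congr (_ ^+ _); lia.
  ring.
have h3 : \prod_(i < n) (1 - x ^+ ((n - i.+1).*2.+1)) = Op x n.
  rewrite /Op (reindex_inj rev_ord_inj) /=; apply: eq_bigr=> [[i li]] _ /=.
  by congr (1 - x ^+ _); lia.
rewrite h1 h2 !big_split /= h3 (prodX x n (fun i => (i * 2)%N)) !prodC sum_double -/(Op x n).
rewrite -exprM [(n.*2.-1 * n)%N]mulnC exprD; ring.
Qed.

Definition dist (j n : nat) := ((n - j) + (j - n))%N.

Lemma gauss_exp j n : (0 < n)%N -> (j <= n.*2)%N ->
  ('C(j, 2) * 2 + n.*2.-1 * (n.*2 - j) = dist j n * dist j n + ('C(n, 2) * 2 + n * n.*2.-1))%N.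
Proof.
move=> n0 jn.
have h1 := bin2_eq j; have h2 := bin2_eq n.
set a := n.*2.-1; have h3 : (a + 1 = n * 2)%N by rewrite /a; lia.
set cj := 'C(j, 2) in h1 *; set cn := 'C(n, 2) in h2 *.
case: (leqP j n)=> le.
  have -> : dist j n = (n - j)%N by rewrite /dist; lia.
  set d := (n - j)%N.
  have hn : n = (j + d)%N by rewrite /d; lia.
  have -> : (n.*2 - j = j + d * 2)%N by rewrite /d; lia.
  clearbody d; rewrite hn in h2 h3 *; clear -h1 h2 h3; nia.
have -> : dist j n = (j - n)%N by rewrite /dist; lia.
set d := (j - n)%N; set e := (n - d)%N.
have h4 : j = (n + d)%N by rewrite /d; lia.
have h5 : n = (e + d)%N by rewrite /e /d; lia.
have -> : (n.*2 - j = e)%N by rewrite /e /d; lia.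
clearbody d e; rewrite h4 in h1; rewrite h5 in h1 h2 h3 *; clear -h1 h2 h3; nia.
Qed.

End Gauss.

Section GaussId.
Variable R : idomainType.
Implicit Types (x : R).

Definition gs x n := \sum_(j < n.*2.+1) (-1) ^+ (j + n) * x ^+ (dist j n * dist j n).

Lemma gauss_finite x n : x != 0 -> (0 < n)%N ->
  Op x n ^+ 2 = \sum_(j < n.*2.+1) (-1) ^+ (j + n) * qb (x ^+ 2) n.*2 j * x ^+ (dist j n * dist j n).
Proof.
move=> x0 n0.
have := qbinom (x ^+ 2) (x ^+ n.*2.-1) n.*2.
rewrite gauss_prod //.
have -> : \sum_(j < n.*2.+1) qterm (x ^+ 2) (x ^+ n.*2.-1) n.*2 j
   = x ^+ ('C(n, 2) * 2 + n * n.*2.-1) *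
     \sum_(j < n.*2.+1) (-1) ^+ j * qb (x ^+ 2) n.*2 j * x ^+ (dist j n * dist j n).
  rewrite mulr_sumr; apply: eq_bigr=> [[j lj]] _ /=.
  have hx : (x ^+ 2) ^+ 'C(j, 2) * (x ^+ n.*2.-1) ^+ (n.*2 - j)
     = x ^+ (dist j n * dist j n) * x ^+ ('C(n, 2) * 2 + n * n.*2.-1).
    by rewrite -!exprM -exprD [(2 * _)%N]mulnC (gauss_exp n0 lj) exprD.
  have e : forall a b c d : R, a * b * c * d = a * b * (c * d) by move=> *; ring.
  rewrite /qterm e hx; ring.
set E := x ^+ _; set S := \sum_(j < _) _.
move=> h.
have hE : E != 0 by apply: expf_neq0.
have h' : E * ((-1) ^+ n * Op x n ^+ 2) = E * S by rewrite -h; ring.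
have := mulfI hE h' => {h h'} h.
have -> : Op x n ^+ 2 = (-1) ^+ n * ((-1) ^+ n * Op x n ^+ 2).
  by rewrite mulrA -exprD addnn -mul2n exprM sqrrN !expr1n mul1r.
rewrite h /S mulr_sumr; apply: eq_bigr=> j _; rewrite exprD; ring.
Qed.

End GaussId.

Section More.
Variable R : comNzRingType.
Implicit Types (x y a b : R).

Lemma cg_shift y m k a b : cg y m a b -> cg y (m + k) (a * y ^+ k) (b * y ^+ k).
Proof. by case=> r h; exists r; rewrite -mulrBl h exprD; ring. Qed.

Lemma cg_sum y m n (F G : 'I_n -> R) :
  (forall i, cg y m (F i) (G i)) -> cg y m (\sum_(i < n) F i) (\sum_(i < n) G i).
Proof.
move=> h; elim/big_rec2: _ => [|i a b _ hab]; first exact: cg_refl.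
by apply: cgD.
Qed.

Lemma Ep_cgL (p : R) mu k L : (mu <= k)%N -> (mu <= L)%N -> cg p mu.+1 (Ep p k) (Ep p L).
Proof.
move=> h1 h2; case: (leqP k L)=> le.
  by apply: cg_sym; apply: cg_le (Ep_trunc p le).
by apply: cg_le (Ep_trunc p (ltnW le)).
Qed.

End More.

Section GaussCg.
Variable R : idomainType.

Lemma gauss_cg (x : R) n L : x != 0 -> (0 < n)%N -> (n <= L)%N ->
  cg x n.*2.+1 (Ep x n.*2 ^+ 2) (Ep (x ^+ 2) L * gs x n).
Proof.
move=> x0 n0 nL.
set p := x ^+ 2.
have step1 : forall j : 'I_n.*2.+1,
   cg x n.*2.+1 ((Ep p L) * ((-1) ^+ (j + n) * qb p n.*2 j * x ^+ (dist j n * dist j n)))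
                ((-1) ^+ (j + n) * x ^+ (dist j n * dist j n)).
  move=> [j lj] /=.
  set d := dist j n; set mu := (n - d)%N.
  have jn : (j <= n.*2)%N by [].
  have hmu1 : (mu <= j)%N by rewrite /mu /d /dist; lia.
  have hmu2 : (mu <= n.*2 - j)%N by rewrite /mu /d /dist; lia.
  have hmu3 : (mu <= n.*2)%N by rewrite /mu; lia.
  have hmu4 : (mu <= L)%N by rewrite /mu; lia.
  have hq := qb_prod p jn.
  have c1 : cg p mu.+1 ((Ep p L) * ((Ep p L) * qb p n.*2 j)) ((Ep p L) * 1).
    rewrite mulr1 mulrA; apply: cg_trans _ (Ep_cgL p hmu3 hmu4); rewrite -hq.
    apply: cgMr; apply: cgM; apply: cg_sym.
      refine (Ep_cgL p hmu1 hmu4).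
    refine (Ep_cgL p hmu2 hmu4).
  have c2 := cg_cancel (Ep_unit p L) c1.
  have c3 : cg x (mu.+1 * 2) ((Ep p L) * qb p n.*2 j) 1.
    apply: cg_mod c2; exists 1; by rewrite mul1r -exprM mulnC.
  have c4 := cg_shift (d * d) c3.
  rewrite mul1r in c4.
  have dn : (d <= n)%N by rewrite /d /dist; lia.
  have hle : (n.*2.+1 <= mu.+1 * 2 + d * d)%N by rewrite /mu; clearbody d; nia.
  have c5 := cg_le hle c4.
  have c6 := cgMl ((-1) ^+ (j + n)) c5.
  have -> : Ep p L * ((-1) ^+ (j + n) * qb p n.*2 j * x ^+ (d * d))
     = (-1) ^+ (j + n) * (Ep p L * qb p n.*2 j * x ^+ (d * d)) by ring.
  refine c6.
have s1 := cg_sum step1.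
rewrite -mulr_sumr -gauss_finite // in s1.
rewrite Ep_split.
have c6 : cg x n.*2.+1 (Ep p n) (Ep p L).
  refine (cg_mod _ (Ep_cgL p (leqnn n) nL)).
  by exists x; rewrite /p -exprM -exprS; congr (_ ^+ _); lia.
apply: cg_trans (cgMl (Ep p L) s1).
rewrite exprMn mulrA -expr2 mulrC.
by apply: cgMr; apply: cgX.
Qed.

End GaussCg.

Section Key.
Variable R : idomainType.
Local Notation P := {poly R}.
Implicit Types (a b : P).

Lemma cg_Xk k m M a b : (M <= k * m)%N -> cg ('X ^+ k) m a b -> cg 'X M a b.
Proof.
move=> le h; refine (cg_mod _ h); exists ('X ^+ (k * m - M)).
by rewrite -exprM -exprD subnK.
Qed.

Lemma cg_negX m a b : cg (- 'X) m a b -> cg 'X m a b.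
Proof. by move=> h; refine (cg_mod _ h); exists ((-1) ^+ m); rewrite [LHS]exprNn. Qed.

Lemma unit_Xk k K : (0 < k)%N -> cg ('X : P) 1 (Ep ('X ^+ k) K) 1.
Proof. by move=> k0; apply: (@cg_Xk k 1); rewrite ?muln1 //; apply: (@Ep_unit P). Qed.

Lemma unit_negX K : cg ('X : P) 1 (Ep (- 'X) K) 1.
Proof. by apply: cg_negX; apply: (@Ep_unit P). Qed.

Lemma X_neq0 k : ('X ^+ k : P) != 0.
Proof. by rewrite expf_neq0 // polyX_eq0. Qed.

Lemma key N : (0 < N)%N ->
  cg ('X : P) N.+1 (Ep 'X N.*2 ^+ 8)
     (Ep ('X ^+ 4) N ^+ 2 * gs 'X N ^+ 5 * gs (- 'X) N).
Proof.
move=> N0.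
set M := N.+1.
set Ex := Ep ('X : P) N.*2; set Em := Ep (- ('X : P)) N.*2; set E2 := Ep ('X ^+ 2 : P) N.*2.
set E4 := Ep ('X ^+ 4 : P) N.
set g := gs ('X : P) N; set h := gs (- ('X : P)) N; set g2 := gs ('X ^+ 2 : P) N.
have G1 : cg 'X M (Ex ^+ 2) (E2 * g).
  apply: cg_le (gauss_cg _ N0 _)=> //; [lia | exact: (X_neq0 1) | lia].
have G2 : cg 'X M (E2 ^+ 2) (E4 * g2).
  have := gauss_cg (X_neq0 2) N0 (leqnn N).
  rewrite -exprM; apply: cg_Xk; lia.
have G3 : cg 'X M (Em ^+ 2) (E2 * h).
  have nx : (- ('X : P)) != 0 by rewrite oppr_eq0 polyX_eq0.
  have lN : (N <= N.*2)%N by lia.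
  have H := gauss_cg nx N0 lN.
  rewrite sqrrN in H.
  by apply: cg_negX; apply: cg_le H; lia.
have PP : cg 'X M (Ex * Em * E4) (E2 ^+ 3).
  rewrite /Ex /Em /E4 Ep_prod -/E2.
  have T : cg 'X M (Ep ('X ^+ 2) N) E2.
    apply: (@cg_Xk 2 N.+1); first lia.
    by apply: cg_sym; apply: Ep_trunc; lia.
  rewrite [E2 ^+ 3]exprS; apply: cgMl; exact: cgX.
have uE2 : cg 'X 1 E2 1 by apply: unit_Xk.
have uE4 : cg 'X 1 E4 1 by apply: unit_Xk.
have uEx : cg 'X 1 Ex 1 by apply: (@unit_Xk 1).
have Q : cg 'X M (g2 ^+ 2) (g * h).
  have u : cg 'X 1 ((E4 * E2) ^+ 2) 1 by rewrite -(expr1n _ 2); apply: cgX; apply: cg_unitM.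
  apply: (cg_cancel u).
  have a1 : cg 'X M ((E4 * E2) ^+ 2 * g2 ^+ 2) (E2 ^+ 6).
    have -> : (E4 * E2) ^+ 2 * g2 ^+ 2 = (E4 * g2) ^+ 2 * E2 ^+ 2 by ring.
    have -> : E2 ^+ 6 = (E2 ^+ 2) ^+ 2 * E2 ^+ 2 by ring.
    by apply: cgMr; apply: cgX; apply: cg_sym.
  apply: cg_trans a1 _.
  have a2 : cg 'X M (E2 ^+ 6) ((Ex * Em * E4) ^+ 2) by rewrite -[6%N]/(3 * 2)%N exprM; apply: cgX; apply: cg_sym.
  apply: cg_trans a2 _.
  have -> : (Ex * Em * E4) ^+ 2 = Ex ^+ 2 * Em ^+ 2 * E4 ^+ 2 by ring.
  have -> : (E4 * E2) ^+ 2 * (g * h) = (E2 * g) * (E2 * h) * E4 ^+ 2 by ring.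
  by apply: cgMr; apply: cgM.
have -> : Ex ^+ 8 = (Ex ^+ 2) ^+ 4 by rewrite -exprM.
apply: cg_trans (cgX 4 G1) _.
have -> : (E2 * g) ^+ 4 = (E2 ^+ 2) ^+ 2 * g ^+ 4 by ring.
apply: cg_trans (cgMr _ (cgX 2 G2)) _.
have -> : (E4 * g2) ^+ 2 * g ^+ 4 = E4 ^+ 2 * g ^+ 4 * g2 ^+ 2 by ring.
apply: cg_trans (cgMl _ Q) _.
apply: cg_eq; ring.
Qed.

End Key.

Section Cls.
Variable R : idomainType.
Local Notation P := {poly R}.
Implicit Types (p q : P).

Definition cls (d r : nat) p := forall i, (i %% d != r)%N -> p`_i = 0.

Lemma clsM d r s p q : (0 < d)%N -> cls d r p -> cls d s q -> cls d ((r + s) %% d) (p * q).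
Proof.
move=> d0 hp hq i hi; rewrite coefM big1 // => [[j lj]] _ /=.
case: (eqVneq (j %% d) r)%N=> hj; last by rewrite hp ?mul0r.
case: (eqVneq ((i - j) %% d) s)%N=> hij; last by rewrite hq ?mulr0.
exfalso; move/eqP: hi; apply.
rewrite -hj -hij modnDm subnKC //; lia.
Qed.

Lemma clsD d r p q : cls d r p -> cls d r q -> cls d r (p + q).
Proof. by move=> hp hq i hi; rewrite coefD hp ?hq ?addr0. Qed.

Lemma cls1 d : (1 < d)%N -> cls d 0 (1 : P).
Proof.
move=> d1 i hi; rewrite coef1.
have : (i != 0)%N by apply: contra hi => /eqP ->; rewrite mod0n.
by move/negbTE ->.
Qed.

Lemma clsXn d n : cls d (n %% d) ('X^n : P).
Proof.
move=> i hi; rewrite coefXn.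
have : (i != n)%N by apply: contra hi => /eqP ->.
by move/negbTE ->.
Qed.

Lemma clsX d r p k : (1 < d)%N -> cls d r p -> cls d ((r * k) %% d) (p ^+ k).
Proof.
move=> d1 hp; elim: k=> [|k IH].
  by rewrite muln0 mod0n expr0; apply: cls1.
rewrite exprSr; have := clsM (ltnW d1) IH hp.
by rewrite modnDml mulnS addnC.
Qed.

Lemma cls_prod d (I : Type) (s : seq I) (F : I -> P) :
  (1 < d)%N -> (forall i, cls d 0 (F i)) -> cls d 0 (\prod_(i <- s) F i).
Proof.
move=> d1 h; elim/big_rec: _ => [|i x _ hx]; first exact: cls1.
by have := clsM (ltnW d1) (h i) hx; rewrite add0n mod0n.
Qed.

Lemma cls_sum d r n (F : 'I_n -> P) :
  (forall i, cls d r (F i)) -> cls d r (\sum_(i < n) F i).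
Proof.
move=> h; elim/big_rec: _ => [|i x _ hx]; first by move=> i _; rewrite coef0.
by apply: clsD.
Qed.

Lemma cls0 d r : cls d r (0 : P).
Proof. by move=> i _; rewrite coef0. Qed.

Lemma Ep4_cls N : cls 4 0 (Ep ('X ^+ 4 : P) N).
Proof.
apply: cls_prod=> // i j hj; rewrite coefB coef1 -exprM coefXn.
have : (j != 0)%N by apply: contra hj => /eqP ->.
have : (j != (4 * i.+1))%N by apply: contra hj => /eqP ->; rewrite modnMr.
by move=> /negbTE -> /negbTE ->; rewrite subr0.
Qed.

Lemma sq_even d : ~~ odd d -> ((d * d) %% 4 = 0)%N.
Proof.
move=> h; have := odd_double_half d; rewrite (negbTE h) add0n => <-.
by rewrite -!mul2n mulnA [(2 * _ * 2)%N]mulnC !mulnA -mulnA modnMr.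
Qed.

Lemma sq_odd d : odd d -> ((d * d) %% 4 = 1)%N.
Proof.
move=> h; have := odd_double_half d; rewrite h => <-.
set e := d./2.
have -> : ((1 + e.*2) * (1 + e.*2) = 1 + 4 * (e * e + e))%N.
  rewrite -!mul2n; ring.
by move: (e * e + e)%N => y; lia.
Qed.

Definition ga N := \sum_(j < N.*2.+1) (if odd (dist j N) then 0 else ('X ^+ (dist j N * dist j N) : P)).
Definition gb N := \sum_(j < N.*2.+1) (if odd (dist j N) then ('X ^+ (dist j N * dist j N) : P) else 0).

Lemma odd_dist j N : odd (j + N) = odd (dist j N).
Proof.
rewrite /dist; case: (leqP j N)=> le.
  have -> : (j + N = (N - j + (j - N)) + j.*2)%N by lia.
  by rewrite oddD odd_double addbF.
have -> : (j + N = (N - j + (j - N)) + N.*2)%N by lia.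
by rewrite oddD odd_double addbF.
Qed.

Lemma gs_ab N : gs ('X : P) N = ga N - gb N.
Proof.
rewrite /gs /ga /gb -sumrB; apply: eq_bigr=> j _.
rewrite -signr_odd odd_dist; case: ifP=> _; rewrite ?expr1 ?expr0; ring.
Qed.

Lemma gs_neg N : gs (- ('X : P)) N = ga N + gb N.
Proof.
rewrite /gs /ga /gb -big_split; apply: eq_bigr=> j _ /=.
rewrite (exprNn ('X : P)) mulrA -exprD -signr_odd oddD odd_dist oddM andbb addbb expr0 mul1r.
by case: ifP=> _; rewrite ?addr0 ?add0r.
Qed.

Lemma ga_cls N : cls 4 0 (ga N).
Proof.
apply: cls_sum=> j; case: ifP=> h; first exact: cls0.
by have := @clsXn 4 (dist j N * dist j N); rewrite sq_even ?(negbT h).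
Qed.

Lemma gb_cls N : cls 4 1 (gb N).
Proof.
apply: cls_sum=> j; case: ifP=> h; last exact: cls0.
by have := @clsXn 4 (dist j N * dist j N); rewrite sq_odd.
Qed.

Lemma vanish N i : (i %% 4 = 3)%N ->
  (Ep ('X ^+ 4 : P) N ^+ 2 * gs ('X : P) N ^+ 5 * gs (- ('X : P)) N)`_i = 0.
Proof.
move=> hi.
set E := Ep ('X ^+ 4 : P) N; set a := ga N; set b := gb N.
have term : forall k l, (l %% 4 != 3)%N -> (E ^+ 2 * (a ^+ k * b ^+ l))`_i = 0.
  move=> k l hl.
  have c1 := @clsX 4 0 _ 2 isT (Ep4_cls N).
  have c2 := @clsX 4 0 _ k isT (ga_cls N).
  have c3 := @clsX 4 1 _ l isT (gb_cls N).
  have c4 := clsM (d:=4) isT c2 c3.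
  have c5 := clsM (d:=4) isT c1 c4.
  apply: c5; rewrite hi !mul0n mod0n !add0n mul1n !modn_mod.
  by rewrite eq_sym.
have -> : E ^+ 2 * gs ('X : P) N ^+ 5 * gs (- ('X : P)) N
  = E ^+ 2 * (a ^+ 6 * b ^+ 0) - (E ^+ 2 * (a ^+ 5 * b ^+ 1)) *+ 4
    + (E ^+ 2 * (a ^+ 4 * b ^+ 2)) *+ 5 - (E ^+ 2 * (a ^+ 2 * b ^+ 4)) *+ 5
    + (E ^+ 2 * (a ^+ 1 * b ^+ 5)) *+ 4 - E ^+ 2 * (a ^+ 0 * b ^+ 6).
  rewrite gs_ab gs_neg -/a -/b; ring.
by rewrite !coefB !coefD !coefMNn !term // !mul0rn !addr0 !subr0.
Qed.

End Cls.

Section Part.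
Variable R : comNzRingType.
Local Notation P := {poly R}.

Definition geom (j M : nat) : P := \sum_(a < M) 'X^(a * j).

Lemma geom_inv j M : (0 < j)%N -> cg ('X : P) M ((1 - 'X^j) * geom j M) 1.
Proof.
move=> j0.
have -> : (1 - 'X^j) * geom j M = 1 - ('X^j) ^+ M.
  rewrite /geom.
  have -> : \sum_(a < M) ('X^(a * j) : P) = \sum_(a < M) ('X^j) ^+ a.
    by apply: eq_bigr=> a _; rewrite -exprM mulnC.
  by rewrite -opprB mulNr -subrX1 opprB.
rewrite -exprM; apply: cg_factor; nia.
Qed.

Lemma npart_cons j L n : npart_list (j :: L) n =
  if (j == 0)%N then 0%N else sumn [seq npart_list L (n - a * j) | a <- iota 0 (n %/ j).+1].
Proof. by []. Qed.

Lemma sumn_ord (f : nat -> nat) k :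
  (sumn [seq f a | a <- iota 0 k])%:R = \sum_(a < k) (f a)%:R :> R.
Proof.
rewrite sumnE big_map natr_sum.
have -> : iota 0 k = index_iota 0 k by rewrite /index_iota subn0.
by rewrite big_mkord.
Qed.

Lemma npart_coef (L : seq nat) n M : all (fun j => 0 < j)%N L -> (n < M)%N ->
  (\prod_(j <- L) geom j M)`_n = (npart_list L n)%:R.
Proof.
elim: L n=> [|j L IH] n.
  by move=> _ _; rewrite big_nil coef1.
case/andP=> j0 hL nM.
have jn0 : (j == 0)%N = false by rewrite eqn0Ngt j0.
rewrite npart_cons big_cons jn0 sumn_ord /geom mulr_suml coef_sum.
have -> : \sum_(a < M) ('X^(a * j) * \prod_(j0 <- L) geom j0 M)`_n
    = \sum_(a < M) (if (a < (n %/ j).+1)%N then (npart_list L (n - a * j))%:R else 0).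
  apply: eq_bigr=> a _; rewrite coefXnM ltnS leq_divRL //.
  case: ltnP=> h //=; by rewrite IH //; lia.
rewrite -big_mkcond /=.
rewrite -(big_ord_widen M (fun a => (npart_list L (n - a * j))%:R : R)); last first.
  by have := leq_div n j; lia.
by [].
Qed.

Lemma colored_pos k l m n : all (fun j => 0 < j)%N (colored_parts k l m n).
Proof.
rewrite /colored_parts.
have : all (fun j => 0 < j)%N [seq j <- iota 1 n | ~~ (l %| j)%N && ~~ (m %| j)%N].
  rewrite all_filter; apply/allP=> x; rewrite mem_iota /= => /andP [h _].
  by apply/implyP.
elim: [seq j <- iota 1 n | _]=> [|x s IH] //= /andP [hx hs].
by rewrite all_cat all_nseq hx orbT IH.
Qed.

Definition allowed (t j : nat) := ~~ (5 %| j)%N && ~~ (4 * t %| j)%N.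

Lemma PP_eq t N M :
  \prod_(j <- colored_parts 2 5 (4 * t) N) geom j M
  = \prod_(j <- iota 1 N | allowed t j) (geom j M * geom j M).
Proof.
rewrite /colored_parts big_flatten big_map big_filter /=.
by apply: eq_bigr=> j _; rewrite !big_cons big_nil mulr1.
Qed.

End Part.

Section Gen.
Variable R : comNzRingType.
Local Notation P := {poly R}.

Lemma cg_coef (p q : P) M n : cg 'X M p q -> (n < M)%N -> p`_n = q`_n.
Proof.
case=> r h nM; apply/eqP; rewrite -subr_eq0 -coefB h coefMXn.
by rewrite nM.
Qed.

Lemma reindex5 (F : nat -> P) N :
  \prod_(j <- iota 1 N | (5 %| j)%N) F j = \prod_(i <- iota 1 (N %/ 5)) F (5 * i)%N.
Proof.
elim: N=> [|N IH]; first by rewrite !big_nil.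
rewrite -[N.+1]addn1 iotaD big_cat /= big_cons big_nil IH addn1 divnS //.
case: (boolP (5 %| N.+1)%N)=> h; last by rewrite mulr1 add0n.
have e : (N.+1 = 5 * (N %/ 5).+1)%N.
  have := divnK h; rewrite divnS // h add1n => <-; lia.
have -> : (true + N %/ 5 = N %/ 5 + 1)%N by rewrite addnC.
rewrite iotaD big_cat /= big_cons big_nil mulr1.
by rewrite mulr1 add1n e.
Qed.

End Gen.

Section Mod5.
Variable R : idomainType.
Hypothesis ch : 5 \in [pchar R].
Local Notation P := {poly R}.

Lemma frob5 N : Ep ('X : P) N ^+ 5 = Ep ('X ^+ 5) N.
Proof.
have chP : 5 \in [pchar P] by rewrite pchar_poly.
rewrite /Ep -prodrXl; apply: eq_bigr=> i _.
have := pFrobenius_autB_comm chP (commr_sym (commr1 ('X ^+ i.+1 : P))).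
by rewrite !pFrobenius_autE expr1n -!exprM mulnC => ->.
Qed.

Lemma Ep_iota (x : P) N : Ep x N = \prod_(j <- iota 1 N) (1 - x ^+ j).
Proof.
have -> : iota 1 N = index_iota 1 N.+1 by rewrite /index_iota subSS subn0.
by rewrite big_add1 /= big_mkord.
Qed.

Lemma A5_cg N : cg ('X : P) N.+1 (\prod_(j <- iota 1 N | (5 %| j)%N) (1 - 'X ^+ j)) (Ep 'X N ^+ 5).
Proof.
rewrite reindex5 frob5.
have -> : \prod_(i <- iota 1 (N %/ 5)) (1 - ('X : P) ^+ (5 * i)) = Ep ('X ^+ 5) (N %/ 5).
  by rewrite Ep_iota; apply: eq_bigr=> i _; rewrite exprM.
apply: (@cg_Xk _ 5 (N %/ 5).+1); first by have := leq_divM N 5; lia.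
by apply: cg_sym; apply: Ep_trunc; apply: leq_div.
Qed.

Definition Cp t N : P := \prod_(j <- iota 1 N | ~~ (5 %| j)%N && (4 * t %| j)%N) (1 - 'X ^+ j).
Definition Qp t N : P := \prod_(j <- iota 1 N | allowed t j) (1 - 'X ^+ j).

Lemma E_split t N : Ep ('X : P) N =
   \prod_(j <- iota 1 N | (5 %| j)%N) (1 - 'X ^+ j) * (Cp t N * Qp t N).
Proof.
rewrite Ep_iota (bigID (fun j => (5 %| j)%N)) /=.
by rewrite [X in _ * X](bigID (fun j => (4 * t %| j)%N)) /=.
Qed.

Lemma PQ_cg t N : cg ('X : P) N.+1
  (\prod_(j <- colored_parts 2 5 (4 * t) N) geom R j N.+1 * Qp t N ^+ 2) 1.
Proof.
rewrite PP_eq /Qp -prodrXl -big_split /= big_seq_cond.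
apply: cg_prod1=> j /andP [hj _].
have j0 : (0 < j)%N by move: hj; rewrite mem_iota; lia.
have := cgX 2 (geom_inv R N.+1 j0); rewrite expr1n; apply: cg_trans; apply: cg_eq; ring.
Qed.

Lemma PP_cg t N : cg ('X : P) N.+1
  (\prod_(j <- colored_parts 2 5 (4 * t) N) geom R j N.+1) (Cp t N ^+ 2 * Ep 'X N ^+ 8).
Proof.
set PP := \prod_(j <- _) _.
have u : cg ('X : P) 1 (Ep 'X N ^+ 2) 1.
  rewrite -(expr1n _ 2); apply: cgX; apply: Ep_unit.
apply: (cg_cancel u).
have -> : Ep 'X N ^+ 2 * PP = (PP * Qp t N ^+ 2) * (Cp t N ^+ 2 * (\prod_(j <- iota 1 N | (5 %| j)%N) (1 - 'X ^+ j)) ^+ 2).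
  rewrite (E_split t N); ring.
have -> : Ep 'X N ^+ 2 * (Cp t N ^+ 2 * Ep 'X N ^+ 8) = 1 * (Cp t N ^+ 2 * (Ep 'X N ^+ 5) ^+ 2) by ring.
apply: cgM; first exact: PQ_cg.
by apply: cgMl; apply: cgX; apply: A5_cg.
Qed.

End Mod5.

Section Mod2.
Local Open Scope ring_scope.
Variable R : comNzRingType.
Hypothesis ch : 2 \in [pchar R].

Lemma sq_odd_coef (Hp : {poly R}) N : odd N -> (Hp * Hp)`_N = 0.
Proof.
move=> oN; rewrite coefM.
have [k hk] : exists k, (N.+1 = k + k)%N.
  exists N.+1./2; have := odd_double_half N.+1; rewrite /= oN /= add0n -addnn.
  by move=> ->.
rewrite (bigID (fun j : 'I_N.+1 => (j < k)%N)) /=.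
have -> : \sum_(i < N.+1 | ~~ (i < k)%N) Hp`_i * Hp`_(N - i)
        = \sum_(i < N.+1 | (i < k)%N) Hp`_i * Hp`_(N - i).
  rewrite (reindex_inj rev_ord_inj) /=; apply: eq_big=> [[i li]|[i li] _] /=.
    apply/idP/idP; lia.
  have -> : (N.+1 - i.+1 = N - i)%N by lia.
  rewrite subKn; first by rewrite mulrC.
  lia.
by rewrite -mulr2n -mulr_natr (pcharf0 ch) mulr0.
Qed.

End Mod2.

Section Final.
Local Open Scope ring_scope.

Lemma cls_mul0 (R : idomainType) (c w : {poly R}) N :
  cls 4 0 c -> (forall i, (i %% 4 = 3)%N -> w`_i = 0) -> (N %% 4 = 3)%N -> (c * w)`_N = 0.
Proof.
move=> hc hw hN; rewrite coefM big1 // => [[j lj]] _ /=.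
case: (eqVneq (j %% 4) 0)%N=> hj; last by rewrite hc ?mul0r.
rewrite hw ?mulr0 //.
have : (N = j + (N - j))%N by lia.
move=> e; move: hN; rewrite {1}e -modnDm hj add0n modn_mod; lia.
Qed.

Lemma Cp_cls (R : idomainType) t N : cls 4 0 (Cp R t N).
Proof.
rewrite /Cp; elim/big_rec: _ => [|j x /andP [_ hj] hx]; first exact: cls1.
have c1 : cls 4 0 (1 - 'X ^+ j : {poly R}).
  have h4 : (4 %| j)%N by apply: dvdn_trans hj; apply: dvdn_mulr.
  move=> i hi; rewrite coefB coef1 coefXn.
  have : (i != 0)%N by apply: contra hi => /eqP ->.
  have : (i != j)%N by apply: contra hi => /eqP ->; apply/eqP; move: h4; rewrite /dvdn => /eqP.
  by move=> /negbTE -> /negbTE ->; rewrite subr0.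
by have := clsM (d:=4) isT c1 hx.
Qed.

Lemma b_mod5 t n : (5 %| b 2 5 (4 * t) (4 * n + 3))%N.
Proof.
set N := (4 * n + 3)%N.
have ch : 5 \in [pchar 'F_5] by apply: pchar_Fp.
rewrite (dvdn_pcharf ch) /b.
rewrite -(npart_coef _ (colored_pos _ _ _ _) (ltnSn N)).
rewrite (cg_coef (PP_cg ch t N) (ltnSn N)).
have N0 : (0 < N)%N by rewrite /N; lia.
have e1 : cg ('X : {poly 'F_5}) N.+1 (Cp _ t N ^+ 2 * Ep 'X N ^+ 8)
    (Cp _ t N ^+ 2 * (Ep ('X ^+ 4) N ^+ 2 * gs 'X N ^+ 5 * gs (- 'X) N)).
  apply: cgMl; apply: cg_trans (key _ N0).
  by apply: cgX; apply: cg_sym; apply: Ep_trunc; lia.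
rewrite (cg_coef e1 (ltnSn N)).
apply/eqP; apply: cls_mul0.
- by have := @clsX _ 4 0 _ 2 isT (Cp_cls _ t N).
- by move=> i hi; apply: vanish.
- by rewrite /N; lia.
Qed.

Lemma b_mod2 t n : (2 %| b 2 5 (4 * t) (4 * n + 3))%N.
Proof.
set N := (4 * n + 3)%N.
have ch : 2 \in [pchar 'F_2] by apply: pchar_Fp.
rewrite (dvdn_pcharf ch) /b.
rewrite -(npart_coef _ (colored_pos _ _ _ _) (ltnSn N)).
rewrite PP_eq big_split /=.
by apply/eqP; apply: sq_odd_coef=> //; rewrite /N oddD oddM.
Qed.

End Final.

Close Scope ring_scope.
Theorem mainTheorem13 (t n : nat) :
  0 < t -> ~~ (5 %| t) -> b 2 5 (4 * t) (4 * n + 3) %% 10 = 0.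
Proof.
move=> _ _.
have h : (2 * 5 %| b 2 5 (4 * t) (4 * n + 3))%N by rewrite Gauss_dvd // b_mod2 b_mod5.
by move/eqP: h.
Qed.
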